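(* Let $X$ be an exponential vector space over a field $K$ such that $Q(X)$ generates $X\smallsetminus X_0$. Then every maximal orderly independent subset of $Q(X)$ (i.e. every orderly independent $B\subseteq Q(X)$ not properly contained in any orderly independent subset of $Q(X)$) is a basis of $X\smallsetminus X_0$.
   Context: An exponential vector space (evs) over a field $K$ is a partially ordered set $(X,\leq)$ with a binary operation $+$ on $X$ and a map $K\times X\to X$, $(\alpha,x)\mapsto \alpha x$, such that: (A1) $(X,+)$ is a commutative semigroup with identity $\theta$; (A2) $x\leq y$ implies $x+z\leq y+z$ and $\alpha x\leq \alpha y$ for all $z\in X$, $\alpha\in K$; (A3) $\alpha(x+y)=\alpha x+\alpha y$, $\alpha(\beta x)=(\alpha\beta)x$, $(\alpha+\beta)x\leq \alpha x+\beta x$, $1x=x$; (A4) $\alpha x=\theta$ iff $\alpha=0$ or $x=\theta$; (A5) $x+(-1)x=\theta$ iff $x\in X_0$, where $X_0:=\{z\in X: y\not\leq z \text{ for all } y\in X\smallsetminus\{z\}\}$ (the set of minimal elements, called the primitive space; it is a vector space over $K$); (A6) for each $x\in X$ there is $p\in X_0$ with $p\leq x$. For $x\in X\smallsetminus X_0$ let $L(x):=\{z\in X: z\geq \alpha x+p \text{ for some } \alpha\in K\smallsetminus\{0\},\ p\in X_0\}$. A subset $B\subseteq X\smallsetminus X_0$ generates $X\smallsetminus X_0$ if $X\smallsetminus X_0=\bigcup_{b\in B}L(b)$. Elements $x,y\in X\smallsetminus X_0$ are orderly dependent if $x\in L(y)$ or $y\in L(x)$, and orderly independent otherwise; $B\subseteq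 X\smallsetminus X_0$ is orderly independent if any two distinct members of $B$ are orderly independent. A basis of $X\smallsetminus X_0$ is an orderly independent subset of $X\smallsetminus X_0$ that generates $X\smallsetminus X_0$. For $x\in X$ write $\downarrow x:=\{z\in X: z\leq x\}$. The feasible set is $Q(X):=\{x\in X\smallsetminus X_0: (\downarrow x\smallsetminus X_0)\subseteq L(x)\}$. *)

(* Defs.v *)
From mathcomp Require Import all_boot all_algebra.
Set Implicit Arguments. Unset Strict Implicit. Unset Printing Implicit Defensive.
Import GRing.Theory.
Local Open Scope ring_scope.

Definition primitive_of (X : Type) (le : X -> X -> Prop) (z : X) : Prop :=
  forall y : X, y <> z -> ~ le y z.

Record evs (K : fieldType) := EVS {
  car :> Type;
  le : car -> car -> Prop;
  add : car -> car -> car;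
  smul : K -> car -> car;
  theta : car;
  le_refl : forall x, le x x;
  le_antisym : forall x y, le x y -> le y x -> x = y;
  le_trans : forall x y z, le x y -> le y z -> le x z;
  addA : forall x y z, add x (add y z) = add (add x y) z;
  addC : forall x y, add x y = add y x;
  add0 : forall x, add theta x = x;
  le_add : forall x y z, le x y -> le (add x z) (add y z);
  le_smul : forall a x y, le x y -> le (smul a x) (smul a y);
  smul_addr : forall a x y, smul a (add x y) = add (smul a x) (smul a y);
  smul_smul : forall a b x, smul a (smul b x) = smul (a * b) x;
  smul_addl_le : forall a b x, le (smul (a + b) x) (add (smul a x) (smul b x));
  smul1 : forall x, smul 1 x = x;
  smul_eq0 : forall a x, smul a x = theta <-> (a = 0 \/ x = theta);
  addN_eq0 : forall x, add x (smul (-1) x) = theta <-> primitive_of le x;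
  below_primitive : forall x, exists p, primitive_of le p /\ le p x
}.

Section EVSDefs.
Variables (K : fieldType) (X : evs K).

Definition X0 (z : X) : Prop := primitive_of (@le K X) z.

Definition Lset (x : X) (z : X) : Prop :=
  exists (a : K) (p : X), a != 0 /\ X0 p /\ le (add (smul a x) p) z.

Definition generates (B : X -> Prop) : Prop :=
  (forall b, B b -> ~ X0 b) /\
  (forall z, ~ X0 z <-> exists b, B b /\ Lset b z).

Definition orderly_dependent (x y : X) : Prop := Lset y x \/ Lset x y.

Definition orderly_independent_set (B : X -> Prop) : Prop :=
  (forall b, B b -> ~ X0 b) /\
  (forall x y, B x -> B y -> x <> y -> ~ orderly_dependent x y).

Definition is_basis (B : X -> Prop) : Prop :=
  orderly_independent_set B /\ generates B.

Definition Qset (x : X) : Prop :=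
  ~ X0 x /\ (forall z, le z x -> ~ X0 z -> Lset x z).

Definition maximal_oi_subset_of (A B : X -> Prop) : Prop :=
  (forall b, B b -> A b) /\ orderly_independent_set B /\
  (forall C : X -> Prop, (forall c, C c -> A c) -> orderly_independent_set C ->
     (forall b, B b -> C b) -> forall c, C c -> B c).
End EVSDefs.

(* Main.v *)
Require Import Defs.
From mathcomp Require Import all_boot all_algebra.
From Stdlib Require Import Classical.
Import GRing.Theory.
Local Open Scope ring_scope.

Section Aux.
Variables (K : fieldType) (X : evs K).

Lemma addx0 (x : X) : Defs.add x (Defs.theta X) = x.
Proof. by rewrite Defs.addC Defs.add0. Qed.

Lemma smul_theta (a : K) : Defs.smul a (Defs.theta X) = Defs.theta X.
Proof. by apply/Defs.smul_eq0; right. Qed.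

Lemma prim_smul (a : K) (p : X) : X0 p -> X0 (Defs.smul a p).
Proof.
move=> /Defs.addN_eq0 H; apply/Defs.addN_eq0.
rewrite Defs.smul_smul mulrC -Defs.smul_smul -Defs.smul_addr H; exact: smul_theta.
Qed.

Lemma prim_add (p q : X) : X0 p -> X0 q -> X0 (Defs.add p q).
Proof.
move=> /Defs.addN_eq0 Hp /Defs.addN_eq0 Hq; apply/Defs.addN_eq0.
rewrite Defs.smul_addr.
have -> : Defs.add (Defs.add p q) (Defs.add (Defs.smul (-1) p) (Defs.smul (-1) q))
   = Defs.add (Defs.add p (Defs.smul (-1) p)) (Defs.add q (Defs.smul (-1) q)).
  by rewrite !Defs.addA; congr Defs.add; rewrite -!Defs.addA; congr Defs.add; rewrite Defs.addC.
by rewrite Hp Hq Defs.add0.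
Qed.

Lemma Lset_trans (x y z : X) : Lset x y -> Lset y z -> Lset x z.
Proof.
move=> [a [p [a0 [pp hy]]]] [c [p' [c0 [pp' hz]]]].
exists (c * a), (Defs.add (Defs.smul c p) p'); split; first by rewrite mulf_neq0.
split; first by apply: prim_add => //; apply: prim_smul.
apply: Defs.le_trans hz.
have -> : Defs.add (Defs.smul (c * a) x) (Defs.add (Defs.smul c p) p') = Defs.add (Defs.smul c (Defs.add (Defs.smul a x) p)) p'.
  by rewrite Defs.smul_addr Defs.smul_smul Defs.addA.
by apply: Defs.le_add; apply: Defs.le_smul.
Qed.

Lemma Lset_inv (b q p : X) (a : K) :
  a != 0 -> X0 p -> Lset b (Defs.add (Defs.smul a q) p) -> Lset b q.
Proof.
move=> a0 pp [c [p' [c0 [pp' h]]]].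
exists (a^-1 * c), (Defs.add (Defs.smul a^-1 p') (Defs.smul (- a^-1) p)).
split; first by rewrite mulf_neq0 // invr_eq0.
split; first by apply: prim_add; apply: prim_smul.
have h2 := Defs.le_add (Defs.smul (- a^-1) p) (Defs.le_smul a^-1 h).
have E1 : Defs.add (Defs.smul (a^-1 * c) b) (Defs.add (Defs.smul a^-1 p') (Defs.smul (- a^-1) p))
   = Defs.add (Defs.smul a^-1 (Defs.add (Defs.smul c b) p')) (Defs.smul (- a^-1) p).
  by rewrite Defs.smul_addr Defs.smul_smul Defs.addA.
have E2 : Defs.add (Defs.smul a^-1 (Defs.add (Defs.smul a q) p)) (Defs.smul (- a^-1) p) = q.
  rewrite Defs.smul_addr Defs.smul_smul mulVf // Defs.smul1 -Defs.addA.
  have -> : Defs.smul (- a^-1) p = Defs.smul a^-1 (Defs.smul (-1) p) by rewrite Defs.smul_smul mulrN1.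
  by rewrite -Defs.smul_addr (proj2 (Defs.addN_eq0 p) pp) smul_theta addx0.
by rewrite E1; rewrite E2 in h2.
Qed.

End Aux.

Theorem mainTheorem7 (K : fieldType) (X : evs K) :
  generates (@Qset K X) ->
  forall B : X -> Prop, maximal_oi_subset_of (@Qset K X) B -> is_basis B.
Proof.
move=> [_ hQ] B [BQ [[Bnp Boi] Bmax]].
split; first by split.
split => // z; split; last first.
  by move=> [b [Bb Lb]]; apply/hQ; exists b; split => //; apply: BQ.
move=> nz; apply: NNPP => nex.
have [q [Qq Lq]] := proj1 (hQ z) nz.
have key : forall b, B b -> orderly_dependent b q -> False.
  move=> b Bb [Lqb|Lbq].
  - case: Lqb => a [p [a0 [pp hb]]].
    have nY : ~ X0 (Defs.add (Defs.smul a q) p).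
      apply/hQ; exists q; split => //; exists a, p; split => //; split => //.
      exact: Defs.le_refl.
    have := (proj2 (BQ b Bb)) _ hb nY.
    move/(@Lset_inv K X _ _ _ _ a0 pp) => Lbq.
    by apply: nex; exists b; split => //; apply: Lset_trans Lbq Lq.
  - by apply: nex; exists b; split => //; apply: Lset_trans Lbq Lq.
have Bq : B q.
  apply: (Bmax (fun c => B c \/ c = q)).
  - by move=> c [/BQ|->].
  - split; first by move=> c [/Bnp|->] //; case: Qq.
    move=> x y [Bx|->] [By|->] nxy //.
    + exact: Boi.
    + by move=> D; apply: (key x Bx).
    + by move=> [D|D]; apply: (key y By); [right|left].
  - by move=> b Bb; left.
  - by right.
by apply: nex; exists q.
Qed.
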